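(* Let $(P,\leq,{}',M,R,0,1)$ be an operator residuated poset satisfying operator divisibility, and assume that for all $x,y\in P$ $M(x,y)=L(U(x,y'),y)$ and $R(x,y)=LU(x',L(x,y))$. Then $(P,\leq,{}',0,1)$ is a generalized orthomodular poset.
   Context: For a poset $(P,\leq)$ and $A\subseteq P$: $L(A):=\{x\in P\mid x\leq a\text{ for all }a\in A\}$, $U(A):=\{x\in P\mid a\leq x\text{ for all }a\in A\}$; $L(a,b)=L(\{a,b\})$, $L(a,B)=L(\{a\}\cup B)$, $LU(A)=L(U(A))$, and similarly for $U$. An orthoposet is a bounded poset $(P,\leq,{}',0,1)$ with a unary operation $'$ that is an antitone involution ($x''=x$; $x\leq y\Rightarrow y'\leq x'$) and a complementation ($L(x,x')=\{0\}$, $U(x,x')=\{1\}$). A generalized orthomodular poset is an orthoposet such that for all $x,y$, $x\leq y$ implies $U(y)=U(x,L(x',y))$. An operator residuated poset is a tuple $(P,\leq,{}',M,R,0,1)$ where $(P,\leq,0,1)$ is a bounded poset, $'$ an antitone unary operation, and $M,R:P^2\to 2^P$ satisfy for all $x,y,z\in P$: $M(x,y)\subseteq L(z)$ iff $L(x)\subseteq R(y,z)$; $R(x,0)=L(x')$; $R(x,x'')=R(x'',x)=P$. It satisfies operator divisibility if $x\leq y$ implies $L(y,U(R(y,x)))=L(x)$. *)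

(* Defs.v *)
Definition pset (T : Type) := T -> Prop.

Definition sub {T} (A B : pset T) : Prop := forall z, A z -> B z.
Definition seteq {T} (A B : pset T) : Prop := forall z, A z <-> B z.

Definition setT {T} : pset T := fun _ => True.
Definition single {T} (a : T) : pset T := fun z => z = a.
Definition pair {T} (a b : T) : pset T := fun z => z = a \/ z = b.
Definition addel {T} (a : T) (B : pset T) : pset T := fun z => z = a \/ B z.

Section Poset.
Context {T : Type} (le : T -> T -> Prop).

Definition partial_order : Prop :=
  (forall x, le x x) /\
  (forall x y, le x y -> le y x -> x = y) /\
  (forall x y z, le x y -> le y z -> le x z).

Definition bounded (zero one : T) : Prop :=
  forall x, le zero x /\ le x one.

Definition Lset (A : pset T) : pset T := fun x => forall a, A a -> le x a.
Definition Uset (A : pset T) : pset T := fun x => forall a, A a -> le a x.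

Definition antitone (c : T -> T) : Prop := forall x y, le x y -> le (c y) (c x).

Definition orthoposet (c : T -> T) (zero one : T) : Prop :=
  partial_order /\ bounded zero one /\
  (forall x, c (c x) = x) /\ antitone c /\
  (forall x, seteq (Lset (pair x (c x))) (single zero)) /\
  (forall x, seteq (Uset (pair x (c x))) (single one)).

Definition gen_orthomodular (c : T -> T) (zero one : T) : Prop :=
  orthoposet c zero one /\
  forall x y, le x y ->
    seteq (Uset (single y)) (Uset (addel x (Lset (pair (c x) y)))).

Definition operator_residuated (c : T -> T) (M R : T -> T -> pset T)
    (zero one : T) : Prop :=
  partial_order /\ bounded zero one /\ antitone c /\
  (forall x y z, sub (M x y) (Lset (single z)) <-> sub (Lset (single x)) (R y z)) /\
  (forall x, seteq (R x zero) (Lset (single (c x)))) /\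
  (forall x, seteq (R x (c (c x))) setT /\ seteq (R (c (c x)) x) setT).

Definition operator_divisibility (R : T -> T -> pset T) : Prop :=
  forall x y, le x y ->
    seteq (Lset (addel y (Uset (R y x)))) (Lset (single x)).

End Poset.

(* Main.v *)
Require Import Defs.

Theorem mainTheorem3 (T : Type) (le : T -> T -> Prop) (c : T -> T)
    (M R : T -> T -> pset T) (zero one : T) :
  operator_residuated le c M R zero one ->
  operator_divisibility le R ->
  (forall x y, seteq (M x y) (Lset le (addel y (Uset le (pair x (c y)))))) ->
  (forall x y, seteq (R x y) (Lset le (Uset le (addel (c x) (Lset le (pair x y)))))) ->
  gen_orthomodular le c zero one.
Proof.
  intros [PO [BD [AT [RES [R0 RT]]]]] DIV HM HR.
  destruct PO as [Rf [As Tr]].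
  assert (K1 : forall y z, R y z one -> le y z).
  { intros y z H.
    assert (S : sub (M one y) (Lset le (single z))).
    { apply (proj2 (RES one y z)). intros w Hw.
      apply (proj2 (HR y z _)). intros a Ha. apply Tr with one.
      - apply Hw. reflexivity.
      - exact (proj1 (HR y z one) H a Ha). }
    apply (S y).
    - apply (proj2 (HM one y _)). intros a [Ha|Ha].
      + subst; apply Rf.
      + apply Tr with one; [apply BD|]. apply Ha. left; reflexivity.
    - reflexivity. }
  assert (INV : forall x, c (c x) = x).
  { intros x. apply As.
    - apply K1. apply (proj2 (proj2 (RT x) one)). exact I.
    - apply K1. apply (proj2 (proj1 (RT x) one)). exact I. }
  split.
  - split; [split; [exact Rf| split; [exact As|exact Tr]]|].
    split; [exact BD|]. split; [exact INV|]. split; [exact AT|].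
    split.
    + intros x z; split.
      * intros Hz.
        assert (S : sub (M (c x) x) (Lset le (single zero))).
        { apply (proj2 (RES (c x) x zero)). intros w Hw.
          apply (proj2 (R0 x _)). exact Hw. }
        assert (Hz0 : le z zero).
        { apply (S z).
          - apply (proj2 (HM (c x) x _)). intros a [Ha|Ha].
            + subst. apply Hz. left; reflexivity.
            + apply Tr with (c x). apply Hz. right; reflexivity.
              apply Ha. left; reflexivity.
          - reflexivity. }
        unfold single. apply As; [exact Hz0| apply BD].
      * intros Hz. unfold single in Hz. subst. intros a _. apply BD.
    + intros x z; split.
      * intros Hz.
        assert (H1 : R x x one).
        { apply (proj1 (RES one x x)).
          - intros w Hw. apply (proj1 (HM one x _)) in Hw. intros a Ha. unfold single in Ha. subst a. apply Hw. left; reflexivity.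
          - intros a Ha. unfold single in Ha. subst. apply Rf. }
        apply (proj1 (HR x x _)) in H1.
        assert (le one z).
        { apply H1. intros a [Ha|Ha].
          - subst. apply Hz. right; reflexivity.
          - apply Tr with x. apply Ha. left; reflexivity. apply Hz. left; reflexivity. }
        unfold single. apply As; [apply BD|assumption].
      * intros Hz. unfold single in Hz. subst. intros a _. apply BD.
  - intros x y Hxy z. split.
    + intros Hz. assert (Hyz : le y z) by (apply Hz; reflexivity).
      intros a [Ha|Ha].
      * subst. apply Tr with y; assumption.
      * apply Tr with y; [apply Ha; right; reflexivity| assumption].
    + intros Hz a Ha. unfold single in Ha. subst a.
      assert (Hcyx : le (c y) (c x)) by (apply AT; exact Hxy).
      assert (Hxz : le x z) by (apply Hz; left; reflexivity).
      assert (D := DIV (c y) (c x) Hcyx (c z)).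
      assert (Hczy : le (c z) (c y)).
      { apply (proj1 D).
        - intros b [Hb|Hb].
          + subst. apply AT. exact Hxz.
          + assert (Hxb : le x b).
            { apply Hb. apply (proj2 (HR (c x) (c y) _)). intros u Hu.
              rewrite <- (INV x). apply Hu. left; reflexivity. }
            assert (Hcyb : le (c y) b).
            { apply Hb. apply (proj2 (HR (c x) (c y) _)). intros u Hu.
              apply Hu. right. intros a [Ha|Ha]; subst; [exact Hcyx | apply Rf]. }
            assert (le (c b) z).
            { apply Hz. right. intros a [Ha|Ha]; subst.
              - apply AT; exact Hxb.
              - rewrite <- (INV y). apply AT. exact Hcyb. }
            rewrite <- (INV b). apply AT. assumption.
        - reflexivity. }
      rewrite <- (INV y), <- (INV z). apply AT. exact Hczy.
Qed.
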